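(* Consider a combinatorial auction as described in the context, let $x^*$ be an efficient allocation, and let $\bar\rho=(\bar\rho_i)_{i\in\mathcal I}$ be any payment vector that is core-selecting at $x^*$. Then there exists an Artificial Walrasian Equilibrium (obtained by adding valid cuts as artificial items) supporting $x^*$ in which every winning bidder $i$ pays in total exactly $\bar\rho_i$, i.e. $p\,a^{i*}=\bar\rho_i$ where $p$ is the price vector on original and artificial items and $a^{i*}$ is bidder $i$'s allocated bundle in the augmented auction.
   Context: Combinatorial auction (CA): item types $j\in\mathcal J=\{1,\dots,J\}$ with supply $c_j\in\mathbb Z_{\ge1}$ (supply vector $c$); bidders $\mathcal I=\{1,\dots,I\}$; a finite set of bids $\mathcal K=\{1,\dots,K\}$, each bid $k$ made by a bidder $i(k)$ and consisting of a bundle $a^k\in\mathbb Z^J_{\ge0}$ with $a^k\le c$ and an amount $b_k\ge0$; $\mathcal K_i$ is the set of bids of bidder $i$. Bids are taken to be truthful. $\bm A$ is the $J\times K$ matrix with columns $a^k$, and $\bm B$ is the $I\times K$ matrix with $\bm B_{i,k}=1$ iff $k\in\mathcal K_i$, else $0$. A feasible allocation is $x\in\{0,1\}^K$ with $\bm Ax\le c$ and $\bm Bx\le\bm 1$ (at most one bid accepted per bidder). For a set of bidders $\mathcal C$, a supply vector $c'$ and bid amounts, $w(\mathcal C,c',\cdot)$ is the maximum of $\sum_k b_kx_k$ over feasible allocations (with supply $c'$) using only bids of bidders in $\mathcal C$. An efficient allocation $x^*$ is an optimal feasible allocation for all bidders and supply $c$; $a^{i*}$ and $b_{i*}$ denote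 the bundle and amount of bidder $i$'s accepted bid ($\bm 0$ and $0$ if none). A payment vector $\rho$ (with $\rho_i=0$ for bidders with no accepted bid) is core-selecting at $x^*$ if $\rho_i\le b_{i*}$ for all $i$ and for every $\mathcal C\subseteq\mathcal I$: $\sum_{i\in\mathcal C}(b_{i*}-\rho_i)+\sum_{i\in\mathcal I}\rho_i\ge w(\mathcal C,c,\mathcal K^{\mathcal C})$, where $\mathcal K^{\mathcal C}$ is the set of bids of bidders in $\mathcal C$. A Walrasian equilibrium (WE) is a pair $(x^*,p)$, $x^*$ efficient, $p\in\mathbb R^J_{\ge0}$, such that the surpluses $s_i=b_{i*}-p\,a^{i*}$ satisfy $s_i\ge0$ for all $i$, $p\,a^k+s_{i(k)}\ge b_k$ for all bids $k$ (envy-freeness), and $p_j=0$ whenever $(\bm Ax^* )_j<c_j$; payments are $\rho_i=p\,a^{i*}$. A valid cut is a pair $(\alpha,\alpha_0)$ with $\alpha\in\mathbb R^K_{\ge0}$ such that $\alpha x\le\alpha_0$ for every feasible allocation $x$ and $\alpha x^*=\alpha_0$ (fully demanded at $x^*$). Adding it as an artificial item means appending $\alpha$ as a new row of $\bm A$ (bid $k$ contains $\alpha_k$ units of the new item) with supply $\alpha_0$; this leaves the set of feasible allocations unchanged. An Artificial Walrasian Equilibrium (AWE) is a WE of the CA augmented by finitely many valid cuts as artificial items. *)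

(* Defs.v *)
From mathcomp Require Import all_boot all_order all_algebra.
Set Implicit Arguments. Unset Strict Implicit. Unset Printing Implicit Defensive.
Import Order.TTheory GRing.Theory Num.Theory.
Local Open Scope ring_scope.

Section CA.
Variables (R : realFieldType) (J I K : nat).
(* supply c, bundles a (a k j = units of item j in bid k), amounts b, bidder of each bid *)
Variables (c : 'I_J -> nat) (a : 'I_K -> 'I_J -> nat) (b : 'I_K -> R)
          (bidder : 'I_K -> 'I_I).

(* An allocation x in {0,1}^K is represented by the set of accepted bids. *)
Definition feasible (x : {set 'I_K}) : bool :=
  [forall j, (\sum_(k in x) a k j <= c j)%N] &&
  [forall i, (#|[set k in x | bidder k == i]| <= 1)%N].

Definition welfare (x : {set 'I_K}) : R := \sum_(k in x) b k.

Definition coal_value (C : {set 'I_I}) : R :=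
  \big[Num.max/0]_(x : {set 'I_K} | feasible x && [forall k in x, bidder k \in C])
     welfare x.

Definition efficient (x : {set 'I_K}) : Prop :=
  feasible x /\ forall y, feasible y -> welfare y <= welfare x.

Definition win_amount (x : {set 'I_K}) (i : 'I_I) : R :=
  \sum_(k in x | bidder k == i) b k.

Definition is_winner (x : {set 'I_K}) (i : 'I_I) : Prop :=
  exists2 k, k \in x & bidder k = i.

Definition core_selecting (x : {set 'I_K}) (rho : 'I_I -> R) : Prop :=
  (forall i, ~ is_winner x i -> rho i = 0) /\
  (forall i, rho i <= win_amount x i) /\
  (forall C : {set 'I_I},
     \sum_(i in C) (win_amount x i - rho i) + \sum_i rho i >= coal_value C).

(* A cut (alpha, alpha0): alpha k = units of the artificial item in bid k. *)
Definition valid_cut (x : {set 'I_K}) (cut : ('I_K -> R) * R) : Prop :=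
  (forall k, 0 <= cut.1 k) /\
  (forall y, feasible y -> \sum_(k in y) cut.1 k <= cut.2) /\
  \sum_(k in x) cut.1 k = cut.2.

Section Augmented.
Variables (m : nat) (cuts : 'I_m -> ('I_K -> R) * R).

Definition feasible_aug (x : {set 'I_K}) : Prop :=
  feasible x /\ forall l, \sum_(k in x) (cuts l).1 k <= (cuts l).2.

Definition efficient_aug (x : {set 'I_K}) : Prop :=
  feasible_aug x /\ forall y, feasible_aug y -> welfare y <= welfare x.

Definition bid_price (p : 'I_J -> R) (q : 'I_m -> R) (k : 'I_K) : R :=
  \sum_j p j * (a k j)%:R + \sum_l q l * (cuts l).1 k.

Definition payment (x : {set 'I_K}) (p : 'I_J -> R) (q : 'I_m -> R) (i : 'I_I) : R :=
  \sum_(k in x | bidder k == i) bid_price p q k.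

Definition surplus (x : {set 'I_K}) (p : 'I_J -> R) (q : 'I_m -> R) (i : 'I_I) : R :=
  win_amount x i - payment x p q i.

Definition walrasian_eq (x : {set 'I_K}) (p : 'I_J -> R) (q : 'I_m -> R) : Prop :=
  efficient_aug x /\
  (forall j, 0 <= p j) /\ (forall l, 0 <= q l) /\
  (forall i, 0 <= surplus x p q i) /\
  (forall k, bid_price p q k + surplus x p q (bidder k) >= b k) /\
  (forall j, (\sum_(k in x) a k j < c j)%N -> p j = 0) /\
  (forall l, \sum_(k in x) (cuts l).1 k < (cuts l).2 -> q l = 0).
End Augmented.

End CA.

(* Main.v *)
Require Import Defs.
From mathcomp Require Import all_boot all_order all_algebra.
Import Order.TTheory GRing.Theory Num.Theory.
Local Open Scope ring_scope.

Section Helpers.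
Variables (R : realFieldType) (J I K : nat).
Variables (c : 'I_J -> nat) (a : 'I_K -> 'I_J -> nat) (b : 'I_K -> R)
          (bidder : 'I_K -> 'I_I).

Lemma feasible_sub (y z : {set 'I_K}) :
  feasible c a bidder y -> z \subset y -> feasible c a bidder z.
Proof.
move=> /andP[/forallP Hj /forallP Hi] zy; apply/andP; split.
  apply/forallP=> j; apply: leq_trans (Hj j).
  rewrite [X in (X <= _)%N]big_mkcond [X in (_ <= X)%N]big_mkcond /=.
  apply: leq_sum => k _; case: ifP => // kz.
  by rewrite (subsetP zy k kz).
apply/forallP=> i; apply: leq_trans (Hi i); apply: subset_leq_card.
apply/subsetP=> k; rewrite !inE => /andP[kz ->]; by rewrite (subsetP zy k kz).
Qed.

Lemma bigmax_ge (T : eqType) (r : seq T) (P : pred T) (F : T -> R) x :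
  x \in r -> P x -> F x <= \big[Num.max/0]_(i <- r | P i) F i.
Proof.
elim: r => // h r IH; rewrite inE big_cons => /orP[/eqP -> ->|xr Px].
  by rewrite le_max lexx.
case: ifP => _; last exact: IH.
by rewrite le_max IH // orbT.
Qed.
End Helpers.
Arguments feasible_sub {J I K c a bidder y z}.

Theorem theorem1 (R : realFieldType) (J I K : nat)
  (c : 'I_J -> nat) (a : 'I_K -> 'I_J -> nat) (b : 'I_K -> R)
  (bidder : 'I_K -> 'I_I) :
  (forall j, (0 < c j)%N) ->
  (forall k j, (a k j <= c j)%N) ->
  (forall k, 0 <= b k) ->
  forall (xs : {set 'I_K}), efficient c a b bidder xs ->
  forall (rho : 'I_I -> R), core_selecting c a b bidder xs rho ->
  exists (m : nat) (cuts : 'I_m -> ('I_K -> R) * R)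
         (p : 'I_J -> R) (q : 'I_m -> R),
    (forall l, valid_cut c a bidder xs (cuts l)) /\
    walrasian_eq c a b bidder cuts xs p q /\
    (forall i, is_winner bidder xs i -> payment a bidder cuts xs p q i = rho i).
Proof.
move=> _ _ _ xs [feasx effx] rho [rho0 [rhole core]].
pose s i := win_amount b bidder xs i - rho i.
pose g k := b k - s (bidder k).
pose pi k := Num.max 0 (g k).
have uniq_bid : forall k (F : 'I_K -> R), k \in xs ->
    \sum_(k' in xs | bidder k' == bidder k) F k' = F k.
  move=> k F kx.
  have -> : \sum_(k' in xs | bidder k' == bidder k) F k' =
            \sum_(k' in [set k' in xs | bidder k' == bidder k]) F k'.
    by apply: eq_bigl => k'; rewrite inE.
  suff -> : [set k' in xs | bidder k' == bidder k] = [set k] by rewrite big_set1.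
  move: feasx => /andP[_ /forallP Hb].
  have /card_le1_eqP H := Hb (bidder k).
  apply/setP => k'; rewrite !inE; apply/idP/idP.
    by move=> Hk'; apply/eqP; apply: H; rewrite inE ?kx ?eqxx.
  by move=> /eqP ->; rewrite kx eqxx.
have gx : forall k, k \in xs -> g k = rho (bidder k).
  move=> k kx; rewrite /g /s /win_amount uniq_bid //.
  by rewrite opprB addrC subrK.
have sum_single : forall i (F : 'I_K -> R),
    (forall k, k \in xs -> bidder k = i -> F k = rho i) ->
    \sum_(k in xs | bidder k == i) F k = rho i.
  move=> i F HF.
  case: (boolP [exists k, (k \in xs) && (bidder k == i)]).
    move=> /existsP[k /andP[kx /eqP bk]].
    rewrite -[in LHS]bk uniq_bid //; exact: HF.
  move=> /existsPn Hn; rewrite big_pred0; last by move=> k; exact: negbTE (Hn k).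
  apply/esym/rho0 => -[k kx bk]; move: (Hn k); by rewrite kx bk eqxx.
have sumx : forall (F : 'I_K -> R),
    (forall k, k \in xs -> F k = rho (bidder k)) ->
    \sum_(k in xs) F k = \sum_i rho i.
  move=> F HF; rewrite (partition_big bidder predT) //=.
  apply: eq_bigr => i _; apply: sum_single => k kx bk; by rewrite HF // bk.
have L2 : forall y, feasible c a bidder y -> \sum_(k in y) g k <= \sum_i rho i.
  move=> y fy.
  have inj : {in y &, injective bidder}.
    move: fy => /andP[_ /forallP Hi] k1 k2 k1y k2y e.
    move: (Hi (bidder k1)) => /card_le1_eqP H.
    by apply: H; rewrite inE ?k1y ?k2y ?e eqxx.
  pose C := [set bidder k | k in y].
  have : welfare b y <= coal_value c a b bidder C.
    apply: bigmax_ge; first by rewrite mem_index_enum.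
    rewrite fy /=; apply/forallP => k; apply/implyP => ky.
    by apply/imsetP; exists k.
  move: (core C); rewrite (big_imset _ inj) /= => H1 H2.
  rewrite /g sumrB -/(welfare b y) lerBlDr.
  rewrite addrC; exact: le_trans H2 H1.
have L3 : forall y, feasible c a bidder y -> \sum_(k in y) pi k <= \sum_i rho i.
  move=> y fy.
  have -> : \sum_(k in y) pi k = \sum_(k in [set k in y | 0 <= g k]) g k.
    rewrite big_mkcond [RHS]big_mkcond /=; apply: eq_bigr => k _.
    rewrite inE /pi; case: (k \in y) => //=.
    by case: leP => // /ltW.
  apply: L2; apply: (feasible_sub fy).
  by apply/subsetP => k; rewrite inE => /andP[].
have rhoge0 : forall i, 0 <= rho i.
  move=> i; case: (boolP [exists k, (k \in xs) && (bidder k == i)]); last first.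
    move=> /existsPn Hn; rewrite rho0 // => -[k kx bk].
    by move: (Hn k); rewrite kx bk eqxx.
  move=> /existsP[k /andP[kx /eqP bk]].
  have := L2 (xs :\ k) (feasible_sub feasx (subsetDl _ _)).
  rewrite -(sumx g gx) (bigD1 k kx) /=.
  have -> : \sum_(k0 in xs :\ k) g k0 = \sum_(i0 in xs | i0 != k) g i0.
    by apply: eq_bigl => k'; rewrite !inE andbC.
  by rewrite gx // bk lerDr.
have pix : forall k, k \in xs -> pi k = rho (bidder k).
  by move=> k kx; rewrite /pi gx // max_r.
pose cut := (pi, \sum_i rho i).
have vc : valid_cut c a bidder xs cut.
  split; first by move=> k; rewrite /= le_max lexx.
  split; first exact: L3.
  exact: sumx.
pose p := fun j : 'I_J => (0 : R).
pose q := fun l : 'I_1 => (1 : R).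
have bp : forall k, bid_price a (fun _ : 'I_1 => cut) p q k = pi k.
  move=> k; rewrite /bid_price big1 ?add0r; last by move=> j _; rewrite mul0r.
  by rewrite big_ord1 mul1r.
have pay : forall i, payment a bidder (fun _ : 'I_1 => cut) xs p q i = rho i.
  move=> i; rewrite /payment; apply: sum_single => k kx bk.
  by rewrite bp pix // bk.
exists 1%N, (fun _ => cut), p, q.
split; first by move=> _.
split; last by move=> i _; exact: pay.
split.
  split; first by split => // l; exact: L3.
  by move=> y [fy _]; exact: effx.
split; first by move=> j.
split; first by move=> l; rewrite /q ler01.
have sur : forall i, surplus a b bidder (fun _ : 'I_1 => cut) xs p q i = s i.
  by move=> i; rewrite /surplus pay.
split; first by move=> i; rewrite sur subr_ge0.
split.
  move=> k; rewrite bp sur /pi.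
  have : g k <= Num.max 0 (g k) by rewrite le_max lexx orbT.
  by rewrite /g lerBlDr.
split; first by [].
move=> l /=; rewrite (sumx pi pix) ltxx //.
Qed.
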